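(* In the worst case, the number of rounds until the myopic best-response dynamics described below converge is $\Omega(n)$: there is a constant $c>0$ such that for every $n$ there is an instance with $n$ users (nonnegative embedding weights, features, linear threshold classifier, scaled 2-norm cost) for which the dynamics require at least $cn$ rounds to converge.
   Context: Users $i$ have features $x_i\in\mathbb{R}^\ell$; embeddings $\phi(x_i;x_{-i})=\widetilde{w}_{ii}x_i+\sum_{j\neq i}\widetilde{w}_{ji}x_j$ with $\widetilde{w}_{ji}\ge0$. Classifier: $h_{\theta,b}(x_i;x_{-i})=\mathrm{sign}(\theta^\top\phi(x_i;x_{-i})+b)$, $\mathrm{sign}(0)=+1$. Cost $c_\beta(x,x')=\beta\|x-x'\|_2$, $\beta>0$. Dynamics: $x_i^{(0)}=x_i$; at each round all users update concurrently; user $i$ changes her features only if she is currently classified $-1$ and some $x'$ with $h(x';x_{-i})=+1$ (others' current features) has cost $\le2$ from her current features, in which case she moves to the minimum-cost such point; otherwise she stays. Convergence means reaching a round after which no user's features change. *)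

(* Defs.v *)
From mathcomp Require Import all_boot all_order all_algebra.
From mathcomp Require Import reals.
Set Implicit Arguments. Unset Strict Implicit. Unset Printing Implicit Defensive.
Import Order.TTheory GRing.Theory Num.Theory.
Local Open Scope ring_scope.

Section Strategic.
Variable R : realType.

Definition feat (l : nat) := 'I_l -> R.
Definition profile (n l : nat) := 'I_n -> feat l.

Definition dotp (l : nat) (u v : feat l) : R := \sum_(k < l) u k * v k.

(* embedding phi(x_i; x_{-i}) = sum_j w j i x_j, where w j i is \tilde w_{ji}
   (the j = i term is \tilde w_{ii} x_i) *)
Definition embed (n l : nat) (w : 'I_n -> 'I_n -> R) (x : profile n l) (i : 'I_n)
  : feat l := fun k => \sum_(j < n) w j i * x j k.

(* h_{theta,b} = +1 iff theta^T phi + b >= 0 (sign 0 = +1) *)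
Definition positive (n l : nat) (w : 'I_n -> 'I_n -> R) (theta : feat l) (b : R)
  (x : profile n l) (i : 'I_n) : Prop := 0 <= dotp theta (embed w x i) + b.

Definition replace (n l : nat) (x : profile n l) (i : 'I_n) (x' : feat l)
  : profile n l := fun j => if j == i then x' else x j.

Definition cost (l : nat) (beta : R) (x x' : feat l) : R :=
  beta * Num.sqrt (\sum_(k < l) (x k - x' k) ^+ 2).

Definition can_move (n l : nat) (w : 'I_n -> 'I_n -> R) (theta : feat l)
  (b beta : R) (x : profile n l) (i : 'I_n) : Prop :=
  not (positive w theta b x i) /\
  exists x', positive w theta b (replace x i x') i /\ cost beta (x i) x' <= 2.

Definition best_response (n l : nat) (w : 'I_n -> 'I_n -> R) (theta : feat l)
  (b beta : R) (x : profile n l) (i : 'I_n) (y : feat l) : Prop :=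
  (can_move w theta b beta x i ->
     positive w theta b (replace x i y) i /\
     (forall x', positive w theta b (replace x i x') i ->
        cost beta (x i) y <= cost beta (x i) x')) /\
  (not (can_move w theta b beta x i) -> y = x i).

(* one round: all users update concurrently *)
Definition step (n l : nat) (w : 'I_n -> 'I_n -> R) (theta : feat l)
  (b beta : R) (x x' : profile n l) : Prop :=
  forall i, best_response w theta b beta x i (x' i).

Definition is_run (n l : nat) (w : 'I_n -> 'I_n -> R) (theta : feat l)
  (b beta : R) (x0 : profile n l) (traj : nat -> profile n l) : Prop :=
  traj 0%N = x0 /\ forall t, step w theta b beta (traj t) (traj t.+1).

Definition stable_from (n l : nat) (traj : nat -> profile n l) (T : nat) : Prop :=
  forall t i, (T <= t)%N -> traj t i = traj T i.

Definition converges (n l : nat) (traj : nat -> profile n l) : Prop :=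
  exists T, stable_from traj T.
End Strategic.

(* Main.v *)
Require Import Defs.
From mathcomp Require Import all_boot all_order all_algebra.
From mathcomp Require Import reals.
From mathcomp Require Import lra.
From Stdlib Require Import FunctionalExtensionality.
Import Order.TTheory GRing.Theory Num.Theory.
Local Open Scope ring_scope.

Section Constr.
Variable R : realType.
Variable n : nat.

Definition ww (j i : 'I_n) : R := if j == i then 1 else if (j < i)%N then 2 else 0.
Definition th : feat R 1 := fun _ => 1.
Definition vv (t : nat) (i : 'I_n) : R := if (i < t)%N then 0 else -1.
Definition PP (t : nat) : profile R n 1 := fun i => fun _ => vv t i.

Definition SS (x : profile R n 1) (i : 'I_n) : R :=
  \sum_(j | j != i) ww j i * x j ord0.

Lemma dot_split x i : dotp th (embed ww x i) = x i ord0 + SS x i.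
Proof.
rewrite /dotp big_ord1 /th mul1r /embed (bigD1 i) //= /ww eqxx mul1r.
by [].
Qed.

Lemma pos_iff x i x' :
  positive ww th 0 (replace x i x') i <-> 0 <= x' ord0 + SS x i.
Proof.
rewrite /positive addr0 dot_split /replace eqxx.
have -> : SS (fun j => if j == i then x' else x j) i = SS x i.
  by apply: eq_bigr => j /negbTE ->.
by [].
Qed.

Lemma pos_iff0 x i : positive ww th 0 x i <-> 0 <= x i ord0 + SS x i.
Proof. by rewrite /positive addr0 dot_split. Qed.

Lemma cost1 (a b : feat R 1) : cost 1 a b = `|a ord0 - b ord0|.
Proof. by rewrite /cost mul1r big_ord1 sqrtr_sqr. Qed.

Lemma SS_le t (i : 'I_n) : (i <= t)%N -> SS (PP t) i = 0.
Proof.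
move=> it; apply: big1 => j ji; rewrite /ww (negbTE ji) /PP /vv.
case: ifP => jlt; last by rewrite mul0r.
by rewrite (leq_trans jlt it) mulr0.
Qed.

Lemma SS_gt t (i : 'I_n) : (t < i)%N -> SS (PP t) i <= -2.
Proof.
move=> ti.
have tn : (t < n)%N by apply: ltn_trans ti (ltn_ord i).
pose tt := Ordinal tn.
have tti : tt != i by apply/eqP => /(congr1 val) /= E; move: ti; rewrite E ltnn.
rewrite /SS (bigD1 tt) //=.
have -> : ww tt i * PP t tt ord0 = -2.
  by rewrite /ww (negbTE tti) ti /PP /vv ltnn; lra.
have : \sum_(j | (j != i) && (j != tt)) ww j i * PP t j ord0 <= 0.
  apply: sumr_le0 => j _; apply: mulr_ge0_le0.
    rewrite /ww; case: ifP => _; first lra; case: ifP => _; lra.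
  rewrite /PP /vv; case: ifP => _; lra.
lra.
Qed.

Lemma vv_lt t (i : 'I_n) : (i < t)%N -> vv t i = 0.
Proof. by rewrite /vv => ->. Qed.
Lemma vv_ge t (i : 'I_n) : (t <= i)%N -> vv t i = -1.
Proof. by rewrite /vv ltnNge => ->. Qed.

Lemma feq (y : feat R 1) c : y ord0 = c -> y = (fun _ => c).
Proof.
move=> E; apply: functional_extensionality => k.
by rewrite (ord1 k).
Qed.

Lemma br_exact t (i : 'I_n) y :
  best_response ww th 0 1 (PP t) i y <-> y = PP t.+1 i.
Proof.
have [ilt|ige] := ltnP i t.
  have nm : ~ can_move ww th 0 1 (PP t) i.
    case=> H _; apply: H; apply/pos_iff0.
    rewrite (SS_le _ _ (ltnW ilt)) /PP (vv_lt _ _ ilt); lra.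
  have -> : PP t.+1 i = PP t i.
    by rewrite /PP (vv_lt _ _ ilt) (vv_lt t.+1 i (ltnW ilt)).
  split; first by case=> _ H; exact: H.
  by move=> ->; split => // /nm.
have [ieq|igt] := eqVneq (val i) t.
  have S0 : SS (PP t) i = 0 by apply: SS_le; rewrite ieq.
  have v0 : PP t i ord0 = -1 by rewrite /PP vv_ge // ieq.
  have cm : can_move ww th 0 1 (PP t) i.
    split.
      by move/pos_iff0; rewrite S0 v0; lra.
    exists (fun _ => 0); split; first by apply/pos_iff; rewrite S0; lra.
    rewrite cost1 v0 subr0 normrN normr1; lra.
  have -> : PP t.+1 i = (fun _ => 0) by rewrite /PP vv_lt // ieq.
  have p0 : positive ww th 0 (replace (PP t) i (fun _ => 0)) i.
    by apply/pos_iff; rewrite S0; lra.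
  split.
    case=> /(_ cm) [/pos_iff Hp Hm] _; apply: feq.
    rewrite S0 addr0 in Hp.
    have := Hm _ p0.
    rewrite !cost1 v0 subr0 normrN normr1 (ler0_norm (x := -1 - y ord0)); lra.
  move=> ->; split; last by [].
  move=> _; split; first exact: p0.
  move=> x' /pos_iff; rewrite S0 addr0 => H.
  rewrite !cost1 v0 subr0 normrN normr1 (ler0_norm (x := -1 - x' ord0)); lra.
have ti : (t < i)%N by rewrite ltn_neqAle eq_sym igt ige.
have Sl := SS_gt _ _ ti.
have v0 : PP t i ord0 = -1 by rewrite /PP vv_ge.
have nm : ~ can_move ww th 0 1 (PP t) i.
  case=> _ [x' [/pos_iff Hp]]; rewrite cost1 v0 (ler0_norm (x := -1 - x' ord0)); lra.
have -> : PP t.+1 i = PP t i by rewrite /PP (vv_ge _ _ ti) (vv_ge _ _ ige).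
split; first by case=> _ H; exact: H.
by move=> ->; split => // /nm.
Qed.

End Constr.

Theorem corollary2 (R : realType) :
  exists c : R, 0 < c /\
  forall n : nat, exists (l : nat) (w : 'I_n -> 'I_n -> R) (x0 : profile R n l)
    (theta : feat R l) (b beta : R),
    0 < beta /\ (forall j i, 0 <= w j i) /\
    (exists traj, is_run w theta b beta x0 traj) /\
    (forall traj, is_run w theta b beta x0 traj ->
       converges traj /\
       (forall T : nat, stable_from traj T -> c * n%:R <= T%:R)).
Proof.
exists 1; split; first exact: ltr01.
move=> n; exists 1%N, (@ww R n), (PP R n 0), (th R), 0, 1.
split; first exact: ltr01.
split.
  move=> j i; rewrite /ww; case: ifP => _; first lra; case: ifP => _; lra.
split.
  exists (PP R n); split => // t i; exact/br_exact.
move=> traj [H0 Hs].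
have E : forall t, traj t = PP R n t.
  elim=> [|t IH] //; apply: functional_extensionality => i.
  by apply/br_exact; rewrite -IH; apply: Hs.
split.
  exists n => t i nt; rewrite !E /PP.
  by rewrite (vv_lt _ _ _ _ (leq_trans (ltn_ord i) nt)) (vv_lt _ _ _ _ (ltn_ord i)).
move=> T st; rewrite mul1r ler_nat leqNgt; apply/negP => Tn.
have := st n (Ordinal Tn) (ltnW Tn); rewrite !E /PP => /(congr1 (fun f => f ord0)).
rewrite (vv_lt _ _ n (Ordinal Tn) Tn) (vv_ge _ _ T (Ordinal Tn) (leqnn T)); lra.
Qed.
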